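(* Let $G=C_2^3\oplus C_4$ and let $U$ be a minimal zero-sum sequence over $G$ with $|U|=\mathsf D(G)=7$. Then $3\notin\mathsf L\big(U(-U)\big)$.
   Context: $C_n$ denotes a cyclic group of order $n$ and $C_2^r$ an elementary abelian $2$-group of rank $r$. For a finite abelian group $G$, a sequence over $G$ is an element of the free abelian monoid $\mathcal F(G)$ with basis $G$ (a finite unordered list of elements of $G$, repetitions allowed, written multiplicatively); its length $|S|$ is its number of terms; for $S=g_1\cdots g_\ell$, $-S=(-g_1)\cdots(-g_\ell)$. $\mathcal B(G)$ is the monoid of zero-sum sequences over $G$. A minimal zero-sum sequence (atom) is a nonempty zero-sum sequence that is not a product of two nonempty zero-sum sequences. For $B\in\mathcal B(G)$, $\mathsf L(B)=\{k\in\mathbb N_0: B \text{ is a product of } k \text{ atoms}\}$. The Davenport constant $\mathsf D(G)$ is the maximal length of an atom over $G$. *)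

(* Defs.v *)
From mathcomp Require Import all_boot all_algebra.
Set Implicit Arguments. Unset Strict Implicit. Unset Printing Implicit Defensive.
Import GRing.Theory.
Local Open Scope ring_scope.

(* Sequences over an abelian group G are modelled by [seq G] taken up to
   permutation ([perm_eq]); the monoid product is concatenation. *)

Definition G := ('Z_2 * 'Z_2 * 'Z_2 * 'Z_4)%type.

Definition zero_sum (G : zmodType) (S : seq G) : bool := \sum_(g <- S) g == 0.

Definition atom (G : zmodType) (S : seq G) : Prop :=
  [/\ S != [::], zero_sum S &
      ~ exists S1 S2 : seq G, [/\ S1 != [::], S2 != [::], zero_sum S1,
                                  zero_sum S2 & perm_eq S (S1 ++ S2)]].

Definition negseq (G : zmodType) (S : seq G) : seq G := map (fun g => - g) S.

Definition in_L (G : zmodType) (B : seq G) (k : nat) : Prop :=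
  exists As : seq (seq G),
    [/\ size As = k, forall A, A \in As -> atom A & perm_eq B (flatten As)].

(* Main.v *)
Require Import Defs.
From mathcomp Require Import all_boot all_algebra.
From mathcomp Require Import zify.
Set Implicit Arguments. Unset Strict Implicit. Unset Printing Implicit Defensive.
Import GRing.Theory.
Local Open Scope ring_scope.

Definition e : G := (0, 0, 0, 1 + 1).
Definition inE0 (x : G) : bool := (x == 0) || (x == e).
Definition phi (x : G) := (x.1, odd (nat_of_ord x.2)).
Definition z2 : seq 'Z_2 := [:: 0; 1].
Definition z4 : seq 'Z_4 := [:: 0; 1; 1 + 1; 1 + 1 + 1].
Definition allG : seq G := [seq (x, d) | x <- [seq (y, c) | y <- [seq (a, b) | a <- z2, b <- z2], c <- z2], d <- z4].
Lemma allGP (x : G) : x \in allG.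
Proof.
case: x => [[[[[|[|a]] ?] [[|[|b]] ?]] [[|[|c]] ?]] [[|[|[|[|d]]]] ?]] //; vm_compute; reflexivity.
Qed.

Lemma F1 (x y : G) : x + x != 0 -> y + y != 0 -> - (x + y) + - (x + y) = 0.
Proof.
have H : all (fun x : G => all (fun y : G => (x + x != 0) ==> (y + y != 0) ==> (- (x + y) + - (x + y) == 0)) allG) allG.
  by vm_compute.
move=> hx hy; have := allP (allP H x (allGP x)) y (allGP y).
by rewrite hx hy /= => /eqP.
Qed.

Lemma F2 (x : G) : inE0 (- (x + x)).
Proof.
have H : all (fun x : G => inE0 (- (x + x))) allG by vm_compute.
exact: allP H x (allGP x).
Qed.

Lemma F7 (a b c : G) : phi (c + a) = phi (c + b) -> inE0 (a + b).
Proof.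
have H : all (fun a : G => all (fun b : G => all (fun c : G => (phi (c+a) == phi (c+b)) ==> inE0 (a+b)) allG) allG) allG.
  by vm_compute.
move=> h; have := allP (allP (allP H a (allGP a)) b (allGP b)) c (allGP c).
by rewrite h eqxx.
Qed.

Lemma F6 : e + e = 0. Proof. by apply/eqP; vm_compute. Qed.
Lemma F6' : e != 0. Proof. by vm_compute. Qed.

Definition sig (s : seq G) : G := \sum_(g <- s) g.
Lemma sig_cat s t : sig (s ++ t) = sig s + sig t. Proof. by rewrite /sig big_cat. Qed.
Lemma sig_perm s t : perm_eq s t -> sig s = sig t. Proof. by move=> p; apply: perm_big. Qed.
Lemma sig_neg s : sig (negseq s) = - sig s. Proof. by rewrite /sig big_map sumrN. Qed.
Lemma sig_cons x s : sig (x :: s) = x + sig s. Proof. by rewrite /sig big_cons. Qed.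
Lemma sig_nil : sig [::] = 0. Proof. by rewrite /sig big_nil. Qed.
Lemma negseqK (s : seq G) : negseq (negseq s) = s.
Proof. by rewrite /negseq -map_comp map_id_in // => x _ /=; rewrite opprK. Qed.
Lemma zsE (s : seq G) : zero_sum s = (sig s == 0). Proof. by []. Qed.

Lemma atom_sub (U S R : seq G) : atom U -> perm_eq U (S ++ R) -> S != [::] -> R != [::] -> sig S = 0 -> False.
Proof.
case=> _ zU H p nS nR zS; apply: H; exists S, R; split.
- exact: nS.
- exact: nR.
- by rewrite zsE zS.
- by move: zU; rewrite !zsE (sig_perm p) sig_cat zS add0r.
- exact: p.
Qed.

Lemma atom_neg (A : seq G) : atom A -> atom (negseq A).
Proof.
case=> nA zA H; split.
- by case: A nA {zA H}.
- by rewrite zsE sig_neg; move: zA; rewrite zsE => /eqP ->; rewrite oppr0.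
case=> S1 [S2 [n1 n2 z1 z2 p]]; apply: H; exists (negseq S1), (negseq S2); split.
- by case: S1 n1 {z1 p}.
- by case: S2 n2 {z2 p}.
- by rewrite zsE sig_neg; move: z1; rewrite zsE => /eqP ->; rewrite oppr0.
- by rewrite zsE sig_neg; move: z2; rewrite zsE => /eqP ->; rewrite oppr0.
have := perm_map (fun g : G => - g) p.
by rewrite map_cat -/(negseq (negseq A)) negseqK.
Qed.

Lemma perm_split (T : eqType) (L1 L2 M N : seq T) : perm_eq (L1 ++ L2) (M ++ N) ->
  exists P Q P' Q', [/\ perm_eq M (P ++ Q), perm_eq N (P' ++ Q'), perm_eq L1 (P ++ P') & perm_eq L2 (Q ++ Q')].
Proof.
elim: M L1 L2 => [|x M IH] L1 L2 /= p.
  by exists [::], [::], L1, L2; split => //; rewrite perm_sym.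
have: x \in L1 ++ L2 by rewrite (perm_mem p) inE eqxx.
rewrite mem_cat => /orP [xL|xL].
  have p1 := perm_to_rem xL.
  have p' : perm_eq (rem x L1 ++ L2) (M ++ N).
    rewrite -(perm_cons x); apply: perm_trans p; rewrite -cat_cons perm_cat2r perm_sym //.
  have [P [Q [P' [Q' [h1 h2 h3 h4]]]]] := IH _ _ p'.
  exists (x :: P), Q, P', Q'; split => //; first by rewrite /= perm_cons.
  by apply: perm_trans p1 _; rewrite /= perm_cons.
have p1 := perm_to_rem xL.
have p' : perm_eq (L1 ++ rem x L2) (M ++ N).
  rewrite -(perm_cons x); apply: perm_trans p.
  apply/permP => a; move/permP: p1 => /(_ a); rewrite /= !count_cat /=; lia.
have [P [Q [P' [Q' [h1 h2 h3 h4]]]]] := IH _ _ p'.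
exists P, (x :: Q), P', Q'; split => //.
  move/permP: h1 => h1; apply/permP => a; have := h1 a; rewrite /= !count_cat /=; lia.
by apply: perm_trans p1 _; rewrite /= perm_cons.
Qed.

Lemma count_sub (S U : seq G) : (forall x, count_mem x S <= count_mem x U)%N -> exists R, perm_eq U (S ++ R).
Proof.
elim: S U => [|x S IH] U H; first by exists U.
have xU : x \in U.
  have := H x; rewrite /= eqxx add1n => h.
  by rewrite -has_pred1 has_count; apply: leq_trans h.
have p1 := perm_to_rem xU.
have H' : forall y, (count_mem y S <= count_mem y (rem x U))%N.
  move=> y; have := H y; rewrite (permP p1) /=; lia.
have [R pR] := IH _ H'; exists R; apply: perm_trans p1 _; by rewrite /= perm_cons.
Qed.

Lemma sub_count (S R U : seq G) x : perm_eq U (S ++ R) -> (count_mem x S <= count_mem x U)%N.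
Proof. by move/permP => /(_ (pred1 x)); rewrite count_cat => ->; apply: leq_addr. Qed.

Lemma five (W : seq G) : size W = 5%N -> exists T R, [/\ perm_eq W (T ++ R), T != [::] & inE0 (sig T)].
Proof.
move=> sW.
pose w (i : 'I_5) := nth 0 W i.
pose Ts (A : {set 'I_5}) := [seq w i | i <- enum 'I_5 & i \in A].
pose Rs (A : {set 'I_5}) := [seq w i | i <- enum 'I_5 & i \notin A].
have hW : W = [seq w i | i <- enum 'I_5].
  apply: (@eq_from_nth _ 0); first by rewrite size_map size_enum_ord sW.
  move=> i; rewrite sW => hi.
  by rewrite (nth_map ord0) ?size_enum_ord // /w nth_enum_ord.
have pT : forall A, perm_eq W (Ts A ++ Rs A).
  move=> A; rewrite {1}hW -map_cat; apply: perm_map.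
  by rewrite perm_sym (perm_filterC (fun i => i \in A)).
pose S (A : {set 'I_5}) := \sum_(i <- enum 'I_5 | i \in A) w i.
have sT : forall A, sig (Ts A) = S A.
  by move=> A; rewrite /sig big_map big_filter.
pose f (A : {set 'I_5}) := phi (S A).
have [A [B [nAB eAB]]] : exists A B : {set 'I_5}, A != B /\ f A = f B.
  case: (boolP [exists A, [exists B, (A != B) && (f A == f B)]]).
    case/existsP=> A /existsP [B /andP [h1 /eqP h2]]; by exists A, B.
  move=> H.
  have inj : injective f.
    move=> A B h; apply/eqP; apply/negPn/negP => n; move/negP: H; apply.
    by apply/existsP; exists A; apply/existsP; exists B; rewrite n h eqxx.
  have := @leq_card_in _ _ f (powerset [set: 'I_5]) (in2W inj).
  by rewrite card_powerset cardsT card_ord !card_prod !card_ord card_bool.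
pose C := (A :\: B) :|: (B :\: A).
have hA : S A = \sum_(i <- enum 'I_5 | (i \in A) && (i \in B)) w i + \sum_(i <- enum 'I_5 | (i \in A) && (i \notin B)) w i.
  by rewrite /S (bigID (fun i => i \in B)).
have hB : S B = \sum_(i <- enum 'I_5 | (i \in A) && (i \in B)) w i + \sum_(i <- enum 'I_5 | (i \in B) && (i \notin A)) w i.
  rewrite /S (bigID (fun i => i \in A)) /=; congr (_ + _).
  by apply: eq_bigl => i; rewrite andbC.
have hC : S C = \sum_(i <- enum 'I_5 | (i \in A) && (i \notin B)) w i + \sum_(i <- enum 'I_5 | (i \in B) && (i \notin A)) w i.
  rewrite /S (bigID (fun i => i \in A)) /=; congr (_ + _); apply: eq_bigl => i;
  by rewrite !inE; case: (i \in A); case: (i \in B).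
have CN : C != set0.
  apply: contra nAB => /eqP C0; apply/eqP/setP => i; move/setP: C0 => /(_ i).
  by rewrite !inE; case: (i \in A); case: (i \in B).
case/set0Pn: CN => i iC.
exists (Ts C), (Rs C); split.
- exact: pT.
- have : w i \in Ts C by apply: map_f; rewrite mem_filter iC mem_enum.
  by case: (Ts C).
rewrite sT hC; apply: (F7 (c := \sum_(i <- enum 'I_5 | (i \in A) && (i \in B)) w i)).
by rewrite -hA -hB.
Qed.

Lemma NoE (U : seq G) : atom U -> size U = 7%N -> e \in U -> False.
Proof.
move=> aU sU eU.
have pU := perm_to_rem eU.
set V := rem e U in pU.
have sV : size V = 6%N by rewrite /V size_rem // sU.
have hs : size (take 5 V) = 5%N by rewrite size_take sV.
have [T [R [pW nT iT]]] := five hs.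
have pV : perm_eq V (T ++ R ++ drop 5 V).
  by rewrite -{1}(cat_take_drop 5 V) catA perm_cat2r.
have nD : drop 5 V != [::] by rewrite -size_eq0 size_drop sV.
case/orP: iT => /eqP iT.
- apply: (atom_sub aU (S := T) (R := e :: R ++ drop 5 V)) => //.
  apply: perm_trans pU _; apply/permP => a; move/permP: pV => /(_ a).
  rewrite /= !count_cat /= !count_cat; lia.
- apply: (atom_sub aU (S := e :: T) (R := R ++ drop 5 V)) => //.
  + by apply: perm_trans pU _; rewrite /= perm_cons.
  + by case: (R) => //.
  + by rewrite sig_cons iT F6.
Qed.

Lemma T2six (U X Y Z : seq G) : atom U -> size U = 7%N -> perm_eq U (X ++ Y ++ Z) ->
  size Z = 1%N -> sig Z != 0 -> sig Z = - (sig X + sig X) -> False.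
Proof.
move=> aU sU pU sZ nZ hZ.
case: Z pU sZ nZ hZ => [|z [|z' Z]] //= pU _ nZ hZ.
have hz : sig [:: z] = z by rewrite sig_cons sig_nil addr0.
rewrite hz in nZ hZ.
have := F2 (sig X); rewrite -hZ /inE0 (negbTE nZ) /= => /eqP ez.
apply: (NoE aU sU); rewrite (perm_mem pU) !mem_cat ez inE eqxx.
by rewrite !orbT.
Qed.

Lemma one_mem (g : G) (X : seq G) : g \in X -> size X = 1%N -> X = [:: g].
Proof. by case: X => [|a [|b X]] //; rewrite inE => /eqP ->. Qed.

Lemma classify (U A C D X Y rX rY : seq G) :
  atom U -> size U = 7%N ->
  perm_eq (U ++ negseq U) (A ++ C ++ D) -> atom A -> atom C -> atom D ->
  perm_eq A (X ++ negseq Y) ->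
  perm_eq U (X ++ rX) -> perm_eq U (Y ++ rY) ->
  (exists g, X = [:: g] /\ Y = [:: g]) \/
  exists Z, [/\ perm_eq U (X ++ Y ++ Z), Z != [::], sig Z != 0 & sig Z = - (sig X + sig X)].
Proof.
move=> aU sU pB aA aC aD pA pX pY.
have zA := aA; case: zA => nA zA _.
have sXY : sig X = sig Y.
  move: zA; rewrite zsE (sig_perm pA) sig_cat sig_neg subr_eq0 => /eqP //.
case: (boolP (has (mem Y) X)) => [/hasP [g gX gY] | hn].
  left.
  have gX' := perm_to_rem gX.
  have gY' : - g \in negseq Y by apply: map_f.
  have gY'' := perm_to_rem gY'.
  have pA' : perm_eq A ([:: g; - g] ++ (rem g X ++ rem (- g) (negseq Y))).
    apply: perm_trans pA _; apply/permP => a.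
    move/permP: gX' => /(_ a) h1; move/permP: gY'' => /(_ a) h2.
    rewrite ?count_cat h1 h2 /= ?count_cat /=; lia.
  case: (boolP (rem g X ++ rem (- g) (negseq Y) == [::])) => [/eqP h0|h0]; last first.
    exfalso; apply: (atom_sub aA pA' _ h0) => //.
    by rewrite sig_cons sig_cons sig_nil addr0 subrr.
  have h1 : rem g X = [::] by case: (rem g X) h0.
  have h2 : rem (- g) (negseq Y) = [::] by case: (rem (-g) (negseq Y)) h0 => //; case: (rem g X).
  have s1 : size X = 1%N by move: (size_rem gX); rewrite h1; case: (X) gX => //= ? ? _ <-.
  have s2 : size Y = 1%N by move: (size_rem gY'); rewrite h2 size_map; case: (Y) gY => //= ? ? _ <-.
  exists g; split.
    exact: one_mem gX s1.
  exact: one_mem gY s2.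
right.
have hc : forall x, (count_mem x (X ++ Y) <= count_mem x U)%N.
  move=> x; rewrite count_cat.
  case xX: (x \in X).
    have xY : x \notin Y by move/hasPn: hn => /(_ x xX).
    by rewrite (count_memPn xY) addn0 (sub_count _ pX).
  by move/negbT/count_memPn: xX => ->; rewrite add0n (sub_count _ pY).
have [Z pZ] := count_sub hc.
rewrite -catA in pZ.
have nXY : X ++ Y != [::].
  by move: nA; rewrite -!size_eq0 (perm_size pA) !size_cat size_map.
have sZ : sig Z = - (sig X + sig X).
  have := aU; case=> _ zU _; move: zU; rewrite zsE (sig_perm pZ) !sig_cat -sXY => /eqP h.
  by rewrite addrA addrC in h; apply/eqP; rewrite -addr_eq0 h.
case: (boolP (Z == [::])) => [/eqP Z0|nZ].
  exfalso.
  rewrite Z0 cats0 in pZ.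
  have p1 : perm_eq (C ++ D) (negseq A).
    have p2 : perm_eq (A ++ C ++ D) (A ++ (Y ++ negseq X)).
      rewrite perm_sym; apply: perm_trans pB.
      have q := perm_map (fun g : G => - g) pZ; rewrite -/(negseq U) in q.
      apply/permP => a; move/permP: pZ => /(_ a) h1; move/permP: q => /(_ a) h2.
      move/permP: pA => /(_ a) h3.
      rewrite ?count_cat h1 h2 h3 map_cat ?count_cat -/(negseq X) -/(negseq Y).
      set p1 := count a (negseq Y); set p2 := count a (negseq X); set p3 := count a X; set p4 := count a Y; lia.
    rewrite perm_cat2l in p2; apply: perm_trans p2 _.
    have q := perm_map (fun g : G => - g) pA; rewrite -/(negseq A) map_cat -/(negseq (negseq Y)) negseqK in q.
    apply/permP => a; move/permP: q => /(_ a) h; rewrite h ?count_cat -/(negseq X).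
    by rewrite addnC.
  case: (atom_neg aA) => _ _; apply; exists C, D.
  case: aC => nC zC _; case: aD => nD zD _; split => //.
    by rewrite perm_sym.
exists Z; split => //.
apply/negP => /eqP z0.
apply: (atom_sub aU (S := Z) (R := X ++ Y)) => //.
apply/permP => a; move/permP: pZ => /(_ a) h; rewrite h ?count_cat; lia.
Qed.

Definition sz (s : seq G) : nat := size s.
Lemma szE (s : seq G) : size s = sz s. Proof. by []. Qed.
Lemma sz1 (g : G) : sz [:: g] = 1%N. Proof. by []. Qed.
Ltac nlia := repeat match goal with
 | H : context [size ?s] |- _ => progress rewrite ?szE ?sz1 in H
 end; (try rewrite ?szE ?sz1); lia.

Lemma final (U X1 X2 X3 Y1 Y2 Y3 : seq G) : atom U -> size U = 7%N ->
  perm_eq U (X1 ++ X2 ++ X3) -> perm_eq U (Y1 ++ Y2 ++ Y3) ->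
  sig X1 + sig X2 + sig X3 = 0 ->
  ((exists g, X1 = [:: g] /\ Y1 = [:: g]) \/
   exists Z, [/\ perm_eq U (X1 ++ Y1 ++ Z), Z != [::], sig Z != 0 & sig Z = - (sig X1 + sig X1)]) ->
  ((exists g, X2 = [:: g] /\ Y2 = [:: g]) \/
   exists Z, [/\ perm_eq U (X2 ++ Y2 ++ Z), Z != [::], sig Z != 0 & sig Z = - (sig X2 + sig X2)]) ->
  ((exists g, X3 = [:: g] /\ Y3 = [:: g]) \/
   exists Z, [/\ perm_eq U (X3 ++ Y3 ++ Z), Z != [::], sig Z != 0 & sig Z = - (sig X3 + sig X3)]) ->
  False.
Proof.
move=> aU sU pX pY s0 c1 c2 c3.
have sX := perm_size pX; have sY := perm_size pY.
rewrite !size_cat sU in sX sY.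
have nz : forall (X Z : seq G), sig Z != 0 -> sig Z = - (sig X + sig X) -> sig X + sig X != 0.
  by move=> X Z nZ hZ; apply: contra nZ => /eqP h; rewrite hZ h oppr0.
have szZ : forall (X Y Z : seq G), perm_eq U (X ++ Y ++ Z) -> Z != [::] ->
    (size X + size Y + size Z = 7 /\ 0 < size Z)%N.
  move=> X Y Z p nZ; have := perm_size p; rewrite !size_cat sU => h; split; first by rewrite h addnA.
  by rewrite lt0n size_eq0.
case: c1 => [[g1 [e1 f1]]|[Z1 [p1 n1 z1 h1]]];
case: c2 => [[g2 [e2 f2]]|[Z2 [p2 n2 z2 h2]]];
case: c3 => [[g3 [e3 f3]]|[Z3 [p3 n3 z3 h3]]];
  (try have [a1 b1] := szZ _ _ _ p1 n1);
  (try have [a2 b2] := szZ _ _ _ p2 n2);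
  (try have [a3 b3] := szZ _ _ _ p3 n3);
  (try subst X1); (try subst Y1); (try subst X2); (try subst Y2); (try subst X3); (try subst Y3);
  idtac.
- nlia.
- nlia.
- nlia.
- by apply: (T2six aU sU p2 _ z2 h2); nlia.
- nlia.
- by apply: (T2six aU sU p1 _ z1 h1); nlia.
- by apply: (T2six aU sU p1 _ z1 h1); nlia.
have := F1 (nz _ _ z1 h1) (nz _ _ z2 h2).
have -> : - (sig X1 + sig X2) = sig X3.
  by apply/eqP; rewrite eq_sym -addr_eq0 addrC s0.
by move=> h; move: (nz _ _ z3 h3); rewrite h eqxx.
Qed.

Local Close Scope ring_scope.

Theorem lemma5p6 (U : seq G) :
  atom U -> size U = 7 -> ~ in_L (U ++ negseq U) 3.
Proof.
move=> aU sU [As [sAs aAs pB]].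
case: As sAs aAs pB => [|A1 [|A2 [|A3 [|]]]] //= _ aAs pB.
rewrite cats0 in pB.
have a1 : atom A1 by apply: aAs; rewrite inE eqxx.
have a2 : atom A2 by apply: aAs; rewrite !inE eqxx orbT.
have a3 : atom A3 by apply: aAs; rewrite !inE eqxx !orbT.
have [P1 [Q1 [P' [Q' [h1 h2 h3 h4]]]]] := perm_split pB.
have pB' : perm_eq (P' ++ Q') (A2 ++ A3) by rewrite perm_sym.
have [P2 [Q2 [P3 [Q3 [k1 k2 k3 k4]]]]] := perm_split pB'.
have pX : perm_eq U (P1 ++ P2 ++ P3).
  apply: perm_trans h3 _; by rewrite perm_cat2l.
have pQ : perm_eq (negseq U) (Q1 ++ Q2 ++ Q3).
  apply: perm_trans h4 _; by rewrite perm_cat2l.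
have pY : perm_eq U (negseq Q1 ++ negseq Q2 ++ negseq Q3).
  have := perm_map (fun g : G => (- g)%R) pQ.
  by rewrite -/(negseq (negseq U)) negseqK !map_cat.
have hA1 : perm_eq A1 (P1 ++ negseq (negseq Q1)) by rewrite negseqK.
have hA2 : perm_eq A2 (P2 ++ negseq (negseq Q2)) by rewrite negseqK.
have hA3 : perm_eq A3 (P3 ++ negseq (negseq Q3)) by rewrite negseqK.
have s0 : (sig P1 + sig P2 + sig P3 = 0)%R.
  by case: aU => _ zU _; move: zU; rewrite zsE (sig_perm pX) !sig_cat addrA => /eqP.
apply: (final aU sU pX pY s0).
- apply: (classify aU sU pB a1 a2 a3 hA1 pX pY).
- apply: (classify (C := A1) (D := A3) aU sU _ a2 a1 a3 hA2 (rX := P1 ++ P3) (rY := negseq Q1 ++ negseq Q3)).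
  + by apply: perm_trans pB _; rewrite perm_catCA.
  + by apply: perm_trans pX _; rewrite perm_catCA.
  + by apply: perm_trans pY _; rewrite perm_catCA.
- apply: (classify (C := A1) (D := A2) aU sU _ a3 a1 a2 hA3 (rX := P1 ++ P2) (rY := negseq Q1 ++ negseq Q2)).
  + by apply: perm_trans pB _; rewrite catA perm_catC.
  + by apply: perm_trans pX _; rewrite catA perm_catC.
  + by apply: perm_trans pY _; rewrite catA perm_catC.
Qed.
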